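(* For $n=1$, the Kähler-Ricci soliton metric $g$ described in the context satisfies, for every tangent 2-plane $\alpha$ at every point, $$-\tfrac23<\mathrm{Sec}(\alpha)<0,$$ and both bounds are sharp (the infimum of sectional curvatures over $M$ is $-2/3$ and the supremum is $0$).
   Context: $\mathcal H_3$ is the 3-dimensional Heisenberg group with coordinates $(x,y,z)$ and left-invariant coframe $\sigma=dx$, $\rho=dy$, $\zeta=x\,dy-dz$. $F_1(\phi)=\frac{4}{\phi}\big[1-\phi+\frac{\phi^2}{2}-e^{-\phi}\big]$ for $\phi>0$. On $M=\mathcal H_3\times(0,\infty)$, with $\phi$ the coordinate on $(0,\infty)$, $g=\phi(\sigma^2+\rho^2)+F_1(\phi)\zeta^2+\frac{1}{F_1(\phi)}d\phi^2$; this is a complete Kähler metric (Kähler form $d(\phi\zeta)$) which together with $f=-\phi$ is an expanding gradient Kähler-Ricci soliton, $\mathrm{Ric}+\nabla df=-g$. *)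

(* Defs.v *)
From Stdlib Require Import Reals.
From Coquelicot Require Import Coquelicot.
From mathcomp Require Import all_boot all_order all_algebra.
From mathcomp Require Import Rstruct.

Set Implicit Arguments.
Unset Strict Implicit.
Unset Printing Implicit Defensive.
Import GRing.Theory.

(* Coordinates on M = H_3 x (0,oo): index 0 = x, 1 = y, 2 = z, 3 = phi. *)
Definition point := 'I_4 -> R.
Definition tvec := 'I_4 -> R.

Definition i0 : 'I_4 := @Ordinal 4 0 isT.
Definition i1 : 'I_4 := @Ordinal 4 1 isT.
Definition i2 : 'I_4 := @Ordinal 4 2 isT.
Definition i3 : 'I_4 := @Ordinal 4 3 isT.

Definition inM (p : point) : Prop := Rlt 0 (p i3).

Definition F1 (phi : R) : R :=
  (4 / phi * (1 - phi + phi ^+ 2 / 2 - exp (- phi)))%R.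

(* Coordinate components of
   g = phi (dx^2 + dy^2) + F1(phi) (x dy - dz)^2 + (1/F1(phi)) dphi^2. *)
Definition gcoef (p : point) (i j : 'I_4) : R :=
  let x := p i0 in let phi := p i3 in
  match nat_of_ord i, nat_of_ord j with
  | 0, 0 => phi
  | 1, 1 => (phi + F1 phi * x ^+ 2)%R
  | 1, 2 => (- (F1 phi * x))%R
  | 2, 1 => (- (F1 phi * x))%R
  | 2, 2 => F1 phi
  | 3, 3 => ((F1 phi)^-1)%R
  | _, _ => 0%R
  end.

Definition pd (i : 'I_4) (f : point -> R) (p : point) : R :=
  Derive (fun t => f (fun j => if j == i then t else p j)) (p i).

Definition gmx (p : point) : 'M[R]_4 := \matrix_(i, j) gcoef p i j.

Definition ginv (p : point) (i j : 'I_4) : R := invmx (gmx p) i j.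

Local Open Scope ring_scope.

Definition Gamma (a b c : 'I_4) (p : point) : R :=
  2^-1 * \sum_(d < 4) ginv p a d *
    (pd b (fun q => gcoef q d c) p + pd c (fun q => gcoef q d b) p
     - pd d (fun q => gcoef q b c) p).

(* Riemann tensor, R(d_c, d_d) d_b = Riem a b c d * d_a, with
   R(X,Y)Z = nabla_X nabla_Y Z - nabla_Y nabla_X Z - nabla_[X,Y] Z:
   R^a_{bcd} = d_c Gamma^a_{db} - d_d Gamma^a_{cb}
               + Gamma^a_{ce} Gamma^e_{db} - Gamma^a_{de} Gamma^e_{cb} *)
Definition Riem (a b c d : 'I_4) (p : point) : R :=
  pd c (Gamma a d b) p - pd d (Gamma a c b) p
  + \sum_(e < 4) (Gamma a c e p * Gamma e d b p - Gamma a d e p * Gamma e c b p).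

Definition gdot (p : point) (u v : tvec) : R :=
  \sum_(i < 4) \sum_(j < 4) gcoef p i j * u i * v j.

Definition Rm4 (p : point) (u v : tvec) : R :=
  \sum_(a < 4) \sum_(b < 4) \sum_(c < 4) \sum_(d < 4) \sum_(e < 4)
    Riem a b c d p * u c * v d * v b * gcoef p a e * u e.

Definition sec (p : point) (u v : tvec) : R :=
  Rm4 p u v / (gdot p u u * gdot p v v - gdot p u v ^+ 2).

Definition lin_indep (u v : tvec) : Prop :=
  forall a b : R, (forall i, a * u i + b * v i = 0) -> a = 0 /\ b = 0.

(* Main.v *)
Require Import Defs.
From Stdlib Require Import Reals Lra Psatz.
From Coquelicot Require Import Coquelicot.
Local Open Scope R_scope.

Lemma pos_chain (f f' : R -> R) :
  (forall t, is_derive f t (f' t)) -> f 0 = 0 ->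
  (forall t, 0 < t -> 0 < f' t) -> forall t, 0 < t -> 0 < f t.
Proof.
  intros Hd H0 Hp t Ht.
  destruct (MVT_cor2 f f' 0 t Ht) as [c [Hc Hct]].
  { intros c _. apply is_derive_Reals. apply Hd. }
  rewrite H0 in Hc. assert (0 < f' c * (t - 0)).
  { apply Rmult_lt_0_compat. apply Hp. lra. lra. }
  lra.
Qed.

Lemma ex_pos t : 0 < t -> 1 + t < exp t.
Proof. intros; apply exp_ineq1; lra. Qed.

Lemma ineq_i t : 0 < t -> 1 < exp t * (1 - t + t*t/2).
Proof.
  intros Ht.
  assert (H := pos_chain (fun t => exp t * (1 - t + t*t/2) - 1) (fun t => exp t * (t*t/2))).
  assert (0 < exp t * (1 - t + t * t / 2) - 1); [|lra].
  apply H; auto.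
  - intro s. auto_derive; auto. field.
  - rewrite exp_0. lra.
  - intros s Hs. apply Rmult_lt_0_compat. apply exp_pos. nra.
Qed.

Lemma ineq_ii t : 0 < t -> exp t * (1 - t + t*t/2 - t*t*t/6) < 1.
Proof.
  intros Ht.
  assert (H := pos_chain (fun t => 1 - exp t * (1 - t + t*t/2 - t*t*t/6)) (fun t => exp t * (t*t*t/6))).
  assert (0 < 1 - exp t * (1 - t + t*t/2 - t*t*t/6)); [|lra].
  apply H; auto.
  - intro s. auto_derive; auto. field.
  - rewrite exp_0. lra.
  - intros s Hs. apply Rmult_lt_0_compat. apply exp_pos. assert (0 < s*s) by nra. nra.
Qed.

Lemma ineq_iii t : 0 < t -> 0 < (t - 2) * exp t + t + 2.
Proof.
  intros Ht.
  apply (pos_chain (fun t => (t - 2) * exp t + t + 2) (fun t => (t - 1) * exp t + 1)); auto.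
  - intro s. auto_derive; auto. ring.
  - rewrite exp_0. lra.
  - apply (pos_chain (fun t => (t - 1) * exp t + 1) (fun t => t * exp t)).
    + intro s. auto_derive; auto. ring.
    + rewrite exp_0. lra.
    + intros s Hs. apply Rmult_lt_0_compat; auto. apply exp_pos.
Qed.

Lemma ineq_iv t : 0 < t -> exp t * (t - 2 - t*t*t/6) + t + 2 < 0.
Proof.
  intros Ht.
  assert (0 < - (exp t * (t - 2 - t*t*t/6)) - t - 2); [|lra].
  apply (pos_chain (fun t => - (exp t * (t - 2 - t*t*t/6)) - t - 2) (fun t => - (exp t * (t - 1 - t*t/2 - t*t*t/6)) - 1)); auto.
  - intro s. auto_derive; auto. field.
  - rewrite exp_0. lra.
  - apply (pos_chain (fun t => - (exp t * (t - 1 - t*t/2 - t*t*t/6)) - 1) (fun t => exp t * (t*t + t*t*t/6))).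
    + intro s. auto_derive; auto. field.
    + rewrite exp_0. lra.
    + intros s Hs. apply Rmult_lt_0_compat. apply exp_pos. assert (0 < s*s) by nra. nra.
Qed.

Lemma ineq_v t : 0 < t -> t*t + 2*t + 2 < 2 * exp t.
Proof.
  intros Ht.
  assert (0 < 2 * exp t - (t*t + 2*t + 2)); [|lra].
  apply (pos_chain (fun t => 2 * exp t - (t*t + 2*t + 2)) (fun t => 2 * exp t - 2*t - 2)); auto.
  - intro s. auto_derive; auto. ring.
  - rewrite exp_0. lra.
  - intros s Hs. generalize (ex_pos s Hs). lra.
Qed.

Lemma ineq_vi t : 0 < t -> 0 < exp t * (t*t*t/3 - 2) + (t*t + 2*t + 2).
Proof.
  intros Ht.
  apply (pos_chain (fun t => exp t * (t*t*t/3 - 2) + (t*t + 2*t + 2)) (fun t => exp t * (t*t*t/3 - 2 + t*t) + 2*t + 2)); auto.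
  - intro s. auto_derive; auto. field.
  - rewrite exp_0. lra.
  - apply (pos_chain (fun t => exp t * (t*t*t/3 - 2 + t*t) + 2*t + 2) (fun t => exp t * (t*t*t/3 + 2*t*t + 2*t - 2) + 2)).
    + intro s. auto_derive; auto. field.
    + rewrite exp_0. lra.
    + apply (pos_chain (fun t => exp t * (t*t*t/3 + 2*t*t + 2*t - 2) + 2) (fun t => exp t * (t*t*t/3 + 3*t*t + 6*t))).
      * intro s. auto_derive; auto. field.
      * rewrite exp_0. lra.
      * intros s Hs. apply Rmult_lt_0_compat. apply exp_pos. nra.
Qed.

Lemma ineq_vii t : 0 < t -> t*t + 2 < exp t + exp (- t).
Proof.
  intros Ht.
  assert (0 < exp t + exp (-t) - (t*t+2)); [|lra].
  apply (pos_chain (fun t => exp t + exp (-t) - (t*t+2)) (fun t => exp t - exp (- t) - 2 * t)); auto.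
  - intro s. auto_derive; auto. ring.
  - rewrite Ropp_0, exp_0. lra.
  - apply (pos_chain (fun t => exp t - exp (- t) - 2 * t) (fun t => exp t + exp (- t) - 2)).
    + intro s. auto_derive; auto. ring.
    + rewrite Ropp_0, exp_0. lra.
    + apply (pos_chain (fun t => exp t + exp (- t) - 2) (fun t => exp t - exp (- t))).
      * intro s. auto_derive; auto. ring.
      * rewrite Ropp_0, exp_0. lra.
      * intros s Hs. assert (exp (-s) < exp s) by (apply exp_increasing; lra). lra.
Qed.

Lemma ineq_viii t : 0 < t -> 1 < exp t * (1 - t + t*t/2 - t*t*t/6 + t*t*t*t/24).
Proof.
  intros Ht.
  assert (0 < exp t * (1 - t + t*t/2 - t*t*t/6 + t*t*t*t/24) - 1); [|lra].
  apply (pos_chain (fun t => exp t * (1 - t + t*t/2 - t*t*t/6 + t*t*t*t/24) - 1) (fun t => exp t * (t*t*t*t/24))); auto.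
  - intro s. auto_derive; auto. field.
  - rewrite exp_0. lra.
  - intros s Hs. apply Rmult_lt_0_compat. apply exp_pos. assert (0 < s*s) by nra. nra.
Qed.

From Stdlib Require Import Reals Lra Psatz.
From Coquelicot Require Import Coquelicot.
Local Open Scope R_scope.

Definition Gf (t : R) := 4 * (1 - t + t*t/2 - exp (- t)).
Definition G1 (t : R) := 4 * (-1 + t + exp (- t)).
Definition G2 (t : R) := 4 * (1 - exp (- t)).
Definition FF (t : R) := Gf t / t.
Definition Fd (t : R) := G1 t / t - Gf t / (t*t).
Definition Fdd (t : R) := G2 t / t - 2 * G1 t / (t*t) + 2 * Gf t / (t*t*t).

Lemma Ee t : exp (- t) * exp t = 1.
Proof. rewrite exp_Ropp. field. apply Rgt_not_eq, exp_pos. Qed.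

Lemma inv_lt e P : 0 < e -> 1 < e * P -> / e < P.
Proof. intros He H. apply (Rmult_lt_reg_l e); auto. rewrite Rinv_r; lra. Qed.
Lemma lt_inv e P : 0 < e -> e * P < 1 -> P < / e.
Proof. intros He H. apply (Rmult_lt_reg_l e); auto. rewrite Rinv_r; lra. Qed.

Lemma posE (a b t : R) : 0 < a * exp t + b -> 0 < a + exp (- t) * b.
Proof.
  intros H. replace (a + exp (- t) * b) with (exp (- t) * (a * exp t + b)).
  - apply Rmult_lt_0_compat; auto. apply exp_pos.
  - transitivity (a * (exp (- t) * exp t) + exp (-t) * b); [ring|]. rewrite Ee. ring.
Qed.

Lemma Ei t : 0 < t -> exp (- t) < 1 - t + t*t/2.
Proof. intros Ht. rewrite exp_Ropp. apply inv_lt. apply exp_pos. apply ineq_i; auto. Qed.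
Lemma Eii t : 0 < t -> 1 - t + t*t/2 - t*t*t/6 < exp (- t).
Proof. intros Ht. rewrite exp_Ropp. apply lt_inv. apply exp_pos. apply ineq_ii; auto. Qed.
Lemma Eiii t : 0 < t -> 0 < (t - 2) + exp (- t) * (t + 2).
Proof. intros Ht. apply posE. generalize (ineq_iii t Ht). lra. Qed.
Lemma Eiv t : 0 < t -> (t - 2) + exp (- t) * (t + 2) < t*t*t/6.
Proof.
  intros Ht. assert (0 < - (t - 2 - t*t*t/6) + exp (-t) * (- (t+2))); [|lra].
  apply posE. generalize (ineq_iv t Ht). lra.
Qed.
Lemma Ev t : 0 < t -> exp (- t) * (t*t + 2*t + 2) < 2.
Proof.
  intros Ht. assert (0 < 2 + exp (-t) * (- (t*t + 2*t + 2))); [|lra].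
  apply posE. generalize (ineq_v t Ht). lra.
Qed.
Lemma Evi t : 0 < t -> 2 - exp (- t) * (t*t + 2*t + 2) < t*t*t/3.
Proof.
  intros Ht. assert (0 < (t*t*t/3 - 2) + exp (-t) * (t*t + 2*t + 2)); [|lra].
  apply posE. generalize (ineq_vi t Ht). lra.
Qed.
Lemma Evii t : 0 < t -> exp (- t) * (t*t + 2) < 1 + exp (- t) * exp (- t).
Proof.
  intros Ht. generalize (ineq_vii t Ht) (Ee t) (exp_pos (-t)); intros H1 H2 H3.
  assert (exp (-t) * (t*t+2) < exp (-t) * (exp t + exp (-t))) by (apply Rmult_lt_compat_l; auto).
  nra.
Qed.
Lemma Eviii t : 0 < t -> exp (- t) < 1 - t + t*t/2 - t*t*t/6 + t*t*t*t/24.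
Proof. intros Ht. rewrite exp_Ropp. apply inv_lt. apply exp_pos. apply ineq_viii; auto. Qed.

Lemma div_bounds lo hi a c : 0 < c -> lo * c < a -> a < hi * c -> lo < a / c < hi.
Proof.
  intros Hc H1 H2. split.
  - apply (Rmult_lt_reg_r c); auto. unfold Rdiv. rewrite Rmult_assoc, Rinv_l; lra.
  - apply (Rmult_lt_reg_r c); auto. unfold Rdiv. rewrite Rmult_assoc, Rinv_l; lra.
Qed.

Lemma FF_pos t : 0 < t -> 0 < FF t.
Proof.
  intros Ht. unfold FF, Gf. apply Rdiv_lt_0_compat; auto. generalize (Ei t Ht). lra.
Qed.

Lemma K12_b t : 0 < t -> - (2/3) < - FF t / (t * t) < 0.
Proof.
  intros Ht. assert (H : FF t / (t*t) = Gf t / (t*t*t)) by (unfold FF; field; lra).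
  assert (0 < t*t*t) by (apply Rmult_lt_0_compat; nra).
  assert (0 < Gf t / (t*t*t) < 2/3); [|unfold Rdiv in *; rewrite Ropp_mult_distr_l_reverse in *; lra].
  apply div_bounds; auto; unfold Gf; generalize (Ei t Ht) (Eii t Ht); lra.
Qed.

Lemma m_eq t : 0 < t -> - ((FF t - t * Fd t) / (4 * t * t)) = ((t - 2) + exp (- t) * (t + 2)) / (t*t*t).
Proof. intros Ht. unfold FF, Fd, Gf, G1. field. lra. Qed.

Lemma m_b t : 0 < t -> 0 < - ((FF t - t * Fd t) / (4 * t * t)) < 1/6.
Proof.
  intros Ht. rewrite m_eq; auto.
  assert (0 < t*t*t) by (apply Rmult_lt_0_compat; nra).
  apply div_bounds; auto; generalize (Eiii t Ht) (Eiv t Ht); lra.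
Qed.

Lemma K34_eq t : 0 < t -> Fdd t / 2 = (4 - 2 * exp (- t) * (t*t + 2*t + 2)) / (t*t*t).
Proof. intros Ht. unfold Fdd, Gf, G1, G2. field. lra. Qed.

Lemma K34_b t : 0 < t -> - (2/3) < - Fdd t / 2 < 0.
Proof.
  intros Ht.
  assert (0 < t*t*t) by (apply Rmult_lt_0_compat; nra).
  assert (0 < Fdd t / 2 < 2/3); [|unfold Rdiv in *; rewrite Ropp_mult_distr_l_reverse in *; lra].
  rewrite K34_eq; auto.
  apply div_bounds; auto; generalize (Ev t Ht) (Evi t Ht); lra.
Qed.

Lemma prod_b t : 0 < t ->
  4 * (- ((FF t - t * Fd t) / (4 * t * t))) * (- ((FF t - t * Fd t) / (4 * t * t)))
  < (- FF t / (t * t)) * (- Fdd t / 2).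
Proof.
  intros Ht. rewrite m_eq; auto.
  assert (H : (- FF t / (t * t)) * (- Fdd t / 2) = (Gf t / (t*t*t)) * (Fdd t / 2)) by (unfold FF; field; lra).
  rewrite H, K34_eq; auto.
  set (E := exp (- t)).
  assert (Hd : Gf t / (t * t * t) * ((4 - 2 * E * (t * t + 2 * t + 2)) / (t * t * t))
     - 4 * ((t - 2 + E * (t + 2)) / (t * t * t)) * ((t - 2 + E * (t + 2)) / (t * t * t))
     = 4 * (1 - E * (t*t + 2) + E * E) / (t*t*t*t)).
  { unfold Gf. fold E. field. lra. }
  assert (0 < 4 * (1 - E * (t*t + 2) + E * E) / (t*t*t*t)).
  { apply Rdiv_lt_0_compat. generalize (Evii t Ht). fold E. lra.
    assert (0 < t*t) by nra. nra. }
  lra.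
Qed.

Lemma final_ineq K12 K34 m X Y S :
  - (2/3) < K12 < 0 -> - (2/3) < K34 < 0 -> 0 < m < 1/6 -> 4 * m * m < K12 * K34 ->
  - S <= 2 * X * Y <= S -> 0 < X*X + Y*Y + S ->
  - (2/3) * (X*X + Y*Y + S) < K12*X*X + K34*Y*Y + 6*m*X*Y - m*S < 0.
Proof.
  intros [a1 a2] [b1 b2] [m1 m2] Hp [s1 s2] HD.
  assert (HS : 0 <= S) by lra.
  split.
  - destruct (Rle_lt_dec 0 (X*Y)) as [Hxy|Hxy].
    + destruct (Req_dec X 0) as [HX|HX]; destruct (Req_dec Y 0) as [HY|HY].
      * subst. nra.
      * assert (0 < Y*Y) by nra. nra.
      * assert (0 < X*X) by nra. nra.
      * assert (0 < Y*Y) by nra. assert (0 < X*X) by nra. nra.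
    + assert (HX : X <> 0) by (intro; subst; nra).
      assert (0 < X*X) by nra. nra.
  - destruct (Rle_lt_dec 0 (X*Y)) as [Hxy|Hxy].
    + assert (H1 : K12*X*X + K34*Y*Y + 6*m*X*Y - m*S <= K12*X*X + K34*Y*Y + 4*m*X*Y) by nra.
      destruct (Req_dec X 0) as [HX|HX].
      * subst. destruct (Req_dec Y 0) as [HY|HY].
        -- subst. nra.
        -- assert (0 < Y*Y) by nra. nra.
      * assert (0 < X*X) by nra.
        assert (H2 : K12 * (K12*X*X + K34*Y*Y + 4*m*X*Y) =
                     (K12*X + 2*m*Y)*(K12*X + 2*m*Y) + (K12*K34 - 4*m*m)*(Y*Y)) by ring.
        assert (0 < K12 * (K12*X*X + K34*Y*Y + 4*m*X*Y)).
        { rewrite H2. assert (0 <= (K12*X + 2*m*Y)*(K12*X + 2*m*Y)) by (pose proof (Rle_0_sqr (K12*X + 2*m*Y)); unfold Rsqr in *; lra).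
          destruct (Req_dec Y 0) as [HY|HY].
          - subst. assert (0 < (K12*X)*(K12*X)) by (assert (K12*X <> 0) by (apply Rmult_integral_contrapositive; split; lra); nra). nra.
          - assert (0 < Y*Y) by nra. nra. }
        nra.
    + assert (HX : X <> 0) by (intro; subst; nra).
      assert (0 < X*X) by nra. nra.
Qed.

From Stdlib Require Import Reals Lra Psatz.
From Coquelicot Require Import Coquelicot.
Local Open Scope R_scope.

Lemma FF_der t : t <> 0 -> is_derive FF t (Fd t).
Proof. intros Ht. unfold FF, Fd, Gf, G1. auto_derive; auto. field. auto. Qed.
Lemma Fd_der t : t <> 0 -> is_derive Fd t (Fdd t).
Proof. intros Ht. unfold Fdd, Fd, Gf, G1, G2. auto_derive; auto. field. auto. Qed.

From mathcomp Require Import all_boot all_order all_algebra.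
From mathcomp Require Import Rstruct.

Lemma natmulE n : (GRing.natmul (GRing.one _) n : R) = INR n.
Proof. by rewrite INRE. Qed.
Lemma natmulZ n : (GRing.natmul (GRing.one _) n : R) = IZR (Z.of_nat n).
Proof. by rewrite natmulE INR_IZR_INZ. Qed.
Ltac std := rewrite -?RplusE -?RmultE -?RoppE -?RinvE ?natmulZ -?RpowE -?R0E -?R1E.

Lemma F1E t : F1 t = FF t.
Proof. rewrite /F1 /FF /Gf. std. simpl. unfold Rdiv. ring. Qed.

Lemma ord4 (i : 'I_4) : i = i0 \/ i = i1 \/ i = i2 \/ i = i3.
Proof.
  case: i => [[|[|[|[|n]]]] Hn].
  - by left; apply: val_inj.
  - by right; left; apply: val_inj.
  - by right; right; left; apply: val_inj.
  - by right; right; right; apply: val_inj.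
  - by [].
Qed.

Definition gc (d c : nat) (x ph : R) : R :=
  match d, c with
  | 0, 0 => ph
  | 1, 1 => ph + FF ph * (x * x)
  | 1, 2 => - (FF ph * x)
  | 2, 1 => - (FF ph * x)
  | 2, 2 => FF ph
  | 3, 3 => / FF ph
  | _, _ => IZR 0
  end.

Lemma gcoefE q d c : gcoef q d c = gc d c (q i0) (q i3).
Proof.
  rewrite /gcoef.
  case: (ord4 d) => [->|[->|[->|->]]]; case: (ord4 c) => [->|[->|[->|->]]];
   simpl; std; rewrite ?F1E //; simpl; unfold Rdiv; ring.
Qed.

Definition upd (p : point) (i : 'I_4) (t : R) : point := fun j => if j == i then t else p j.


Definition dgc (i d c : nat) (x ph : R) : R :=
  match i, d, c with
  | 0, 1, 1 => FF ph * (2 * x)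
  | 0, 1, 2 => - FF ph
  | 0, 2, 1 => - FF ph
  | 3, 0, 0 => IZR 1
  | 3, 1, 1 => IZR 1 + Fd ph * (x * x)
  | 3, 1, 2 => - (Fd ph * x)
  | 3, 2, 1 => - (Fd ph * x)
  | 3, 2, 2 => Fd ph
  | 3, 3, 3 => - Fd ph / (FF ph * FF ph)
  | _, _, _ => IZR 0
  end.

Lemma exFF t : t <> 0 -> ex_derive FF t.
Proof. intros H; exists (Fd t); apply FF_der, H. Qed.
Lemma DFF t : t <> 0 -> Derive FF t = Fd t.
Proof. intros H; apply is_derive_unique, FF_der, H. Qed.
Lemma exFd t : t <> 0 -> ex_derive Fd t.
Proof. intros H; exists (Fdd t); apply Fd_der, H. Qed.
Lemma DFd t : t <> 0 -> Derive Fd t = Fdd t.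
Proof. intros H; apply is_derive_unique, Fd_der, H. Qed.

Ltac dsolve Hne Hpos :=
  first [ apply Derive_const
        | (erewrite is_derive_unique; [reflexivity|]; auto_derive;
            repeat split; auto using exFF, exFd; try lra;
            try (rewrite ?(DFF _ Hne) ?(DFd _ Hne)); field; lra) ].

Lemma pd_gcoef p i d c : 0 < p i3 ->
  pd i (fun q => gcoef q d c) p = dgc i d c (p i0) (p i3).
Proof.
  move=> Hp. have Hne : p i3 <> 0 by lra. have HF := FF_pos _ Hp.
  rewrite /pd.
  transitivity (Derive (fun t => gc d c (upd p i t i0) (upd p i t i3)) (p i)).
  { apply Derive_ext => t. apply gcoefE. }
  rewrite /upd.
  case: (ord4 i) => [->|[->|[->|->]]]; simpl;
  case: (ord4 d) => [->|[->|[->|->]]]; case: (ord4 c) => [->|[->|[->|->]]]; simpl.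
  all: try (apply Derive_const).
  all: dsolve Hne HF.
Qed.

Lemma sum4 (f : 'I_4 -> R) : (\sum_(i < 4) f i)%R = f i0 + f i1 + f i2 + f i3.
Proof.
  rewrite !big_ord_recr big_ord0 /=. std.
  have -> : (widen_ord (leqnSn 3) (widen_ord (leqnSn 2) (widen_ord (leqnSn 1) ord_max))) = i0 by apply: val_inj.
  have -> : (widen_ord (leqnSn 3) (widen_ord (leqnSn 2) ord_max)) = i1 by apply: val_inj.
  have -> : (widen_ord (leqnSn 3) ord_max) = i2 by apply: val_inj.
  have -> : (ord_max : 'I_4) = i3 by apply: val_inj.
  ring.
Qed.

Definition Gi (a d : nat) (x ph : R) : R :=
  match a, d with
  | 0, 0 => / ph
  | 1, 1 => / ph
  | 1, 2 => x / ph
  | 2, 1 => x / ph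
  | 2, 2 => / FF ph + x * x / ph
  | 3, 3 => FF ph
  | _, _ => IZR 0
  end.

Lemma ginvE p a d : 0 < p i3 -> ginv p a d = Gi a d (p i0) (p i3).
Proof.
  move=> Hp. have HF := FF_pos _ Hp.
  pose M : 'M[R]_4 := (\matrix_(i, j) Gi i j (p i0) (p i3))%R.
  have HM : (gmx p *m M = 1%:M)%R.
  { apply/matrixP => i j. rewrite !mxE sum4 !mxE !gcoefE.
    case: (ord4 i) => [->|[->|[->|->]]]; case: (ord4 j) => [->|[->|[->|->]]]; simpl; std; simpl;
    field; lra. }
  have Hu : gmx p \in unitmx by case: (mulmx1_unit HM).
  have HI : invmx (gmx p) = M by rewrite -[invmx _]mulmx1 -HM mulmxA mulVmx // mul1mx.
  by rewrite /ginv HI mxE.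
Qed.

Definition Gx (a b c : nat) (x ph : R) : R :=
  match a, b, c with
  | 0, 0, 3 => (((IZR 1 / IZR 2) * /(ph)))
  | 0, 1, 1 => (- ((IZR 1) * (x) * /(ph) * (FF ph)))
  | 0, 1, 2 => (((IZR 1 / IZR 2) * /(ph) * (FF ph)))
  | 0, 2, 1 => (((IZR 1 / IZR 2) * /(ph) * (FF ph)))
  | 0, 3, 0 => (((IZR 1 / IZR 2) * /(ph)))
  | 1, 0, 1 => (((IZR 1 / IZR 2) * (x) * /(ph) * (FF ph)))
  | 1, 0, 2 => (- ((IZR 1 / IZR 2) * /(ph) * (FF ph)))
  | 1, 1, 0 => (((IZR 1 / IZR 2) * (x) * /(ph) * (FF ph)))
  | 1, 1, 3 => (((IZR 1 / IZR 2) * /(ph)))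
  | 1, 2, 0 => (- ((IZR 1 / IZR 2) * /(ph) * (FF ph)))
  | 1, 3, 1 => (((IZR 1 / IZR 2) * /(ph)))
  | 2, 0, 1 => (- ((IZR 1 / IZR 2)) + ((IZR 1 / IZR 2) * (x) * (x) * /(ph) * (FF ph)))
  | 2, 0, 2 => (- ((IZR 1 / IZR 2) * (x) * /(ph) * (FF ph)))
  | 2, 1, 0 => (- ((IZR 1 / IZR 2)) + ((IZR 1 / IZR 2) * (x) * (x) * /(ph) * (FF ph)))
  | 2, 1, 3 => (((IZR 1 / IZR 2) * (x) * /(ph)) - ((IZR 1 / IZR 2) * (x) * /(FF ph) * (Fd ph)))
  | 2, 2, 0 => (- ((IZR 1 / IZR 2) * (x) * /(ph) * (FF ph)))
  | 2, 2, 3 => (((IZR 1 / IZR 2) * /(FF ph) * (Fd ph)))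
  | 2, 3, 1 => (((IZR 1 / IZR 2) * (x) * /(ph)) - ((IZR 1 / IZR 2) * (x) * /(FF ph) * (Fd ph)))
  | 2, 3, 2 => (((IZR 1 / IZR 2) * /(FF ph) * (Fd ph)))
  | 3, 0, 0 => (- ((IZR 1 / IZR 2) * (FF ph)))
  | 3, 1, 1 => (- ((IZR 1 / IZR 2) * (FF ph)) - ((IZR 1 / IZR 2) * (x) * (x) * (FF ph) * (Fd ph)))
  | 3, 1, 2 => (((IZR 1 / IZR 2) * (x) * (FF ph) * (Fd ph)))
  | 3, 2, 1 => (((IZR 1 / IZR 2) * (x) * (FF ph) * (Fd ph)))
  | 3, 2, 2 => (- ((IZR 1 / IZR 2) * (FF ph) * (Fd ph)))
  | 3, 3, 3 => (- ((IZR 1 / IZR 2) * /(FF ph) * (Fd ph)))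
  | _, _, _ => IZR 0
  end.

Lemma GammaE p a b c : 0 < p i3 -> Gamma a b c p = Gx a b c (p i0) (p i3).
Proof.
  move=> Hp. have HF := FF_pos _ Hp.
  rewrite /Gamma sum4 !ginvE // !pd_gcoef //.
  case: (ord4 a) => [->|[->|[->|->]]]; case: (ord4 b) => [->|[->|[->|->]]];
  case: (ord4 c) => [->|[->|[->|->]]]; simpl; std; simpl; field; lra.
Qed.

Definition GxX (a b c : nat) (x ph : R) : R :=
  match a, b, c with
  | 0, 1, 1 => (- ((IZR 1) * /(ph) * (FF ph)))
  | 1, 0, 1 => (((IZR 1 / IZR 2) * /(ph) * (FF ph)))
  | 1, 1, 0 => (((IZR 1 / IZR 2) * /(ph) * (FF ph)))
  | 2, 0, 1 => (((IZR 1) * (x) * /(ph) * (FF ph)))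
  | 2, 0, 2 => (- ((IZR 1 / IZR 2) * /(ph) * (FF ph)))
  | 2, 1, 0 => (((IZR 1) * (x) * /(ph) * (FF ph)))
  | 2, 1, 3 => (((IZR 1 / IZR 2) * /(ph)) - ((IZR 1 / IZR 2) * /(FF ph) * (Fd ph)))
  | 2, 2, 0 => (- ((IZR 1 / IZR 2) * /(ph) * (FF ph)))
  | 2, 3, 1 => (((IZR 1 / IZR 2) * /(ph)) - ((IZR 1 / IZR 2) * /(FF ph) * (Fd ph)))
  | 3, 1, 1 => (- ((IZR 1) * (x) * (FF ph) * (Fd ph)))
  | 3, 1, 2 => (((IZR 1 / IZR 2) * (FF ph) * (Fd ph)))
  | 3, 2, 1 => (((IZR 1 / IZR 2) * (FF ph) * (Fd ph)))
  | _, _, _ => IZR 0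
  end.

Definition GxP (a b c : nat) (x ph : R) : R :=
  match a, b, c with
  | 0, 0, 3 => (- ((IZR 1 / IZR 2) * /(ph) * /(ph)))
  | 0, 1, 1 => (((IZR 1) * (x) * /(ph) * /(ph) * (FF ph)) - ((IZR 1) * (x) * /(ph) * (Fd ph)))
  | 0, 1, 2 => (- ((IZR 1 / IZR 2) * /(ph) * /(ph) * (FF ph)) + ((IZR 1 / IZR 2) * /(ph) * (Fd ph)))
  | 0, 2, 1 => (- ((IZR 1 / IZR 2) * /(ph) * /(ph) * (FF ph)) + ((IZR 1 / IZR 2) * /(ph) * (Fd ph)))
  | 0, 3, 0 => (- ((IZR 1 / IZR 2) * /(ph) * /(ph)))
  | 1, 0, 1 => (- ((IZR 1 / IZR 2) * (x) * /(ph) * /(ph) * (FF ph)) + ((IZR 1 / IZR 2) * (x) * /(ph) * (Fd ph)))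
  | 1, 0, 2 => (((IZR 1 / IZR 2) * /(ph) * /(ph) * (FF ph)) - ((IZR 1 / IZR 2) * /(ph) * (Fd ph)))
  | 1, 1, 0 => (- ((IZR 1 / IZR 2) * (x) * /(ph) * /(ph) * (FF ph)) + ((IZR 1 / IZR 2) * (x) * /(ph) * (Fd ph)))
  | 1, 1, 3 => (- ((IZR 1 / IZR 2) * /(ph) * /(ph)))
  | 1, 2, 0 => (((IZR 1 / IZR 2) * /(ph) * /(ph) * (FF ph)) - ((IZR 1 / IZR 2) * /(ph) * (Fd ph)))
  | 1, 3, 1 => (- ((IZR 1 / IZR 2) * /(ph) * /(ph)))
  | 2, 0, 1 => (- ((IZR 1 / IZR 2) * (x) * (x) * /(ph) * /(ph) * (FF ph)) + ((IZR 1 / IZR 2) * (x) * (x) * /(ph) * (Fd ph)))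
  | 2, 0, 2 => (((IZR 1 / IZR 2) * (x) * /(ph) * /(ph) * (FF ph)) - ((IZR 1 / IZR 2) * (x) * /(ph) * (Fd ph)))
  | 2, 1, 0 => (- ((IZR 1 / IZR 2) * (x) * (x) * /(ph) * /(ph) * (FF ph)) + ((IZR 1 / IZR 2) * (x) * (x) * /(ph) * (Fd ph)))
  | 2, 1, 3 => (- ((IZR 1 / IZR 2) * (x) * /(ph) * /(ph)) + ((IZR 1 / IZR 2) * (x) * /(FF ph) * /(FF ph) * (Fd ph) * (Fd ph)) - ((IZR 1 / IZR 2) * (x) * /(FF ph) * (Fdd ph)))
  | 2, 2, 0 => (((IZR 1 / IZR 2) * (x) * /(ph) * /(ph) * (FF ph)) - ((IZR 1 / IZR 2) * (x) * /(ph) * (Fd ph)))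
  | 2, 2, 3 => (- ((IZR 1 / IZR 2) * /(FF ph) * /(FF ph) * (Fd ph) * (Fd ph)) + ((IZR 1 / IZR 2) * /(FF ph) * (Fdd ph)))
  | 2, 3, 1 => (- ((IZR 1 / IZR 2) * (x) * /(ph) * /(ph)) + ((IZR 1 / IZR 2) * (x) * /(FF ph) * /(FF ph) * (Fd ph) * (Fd ph)) - ((IZR 1 / IZR 2) * (x) * /(FF ph) * (Fdd ph)))
  | 2, 3, 2 => (- ((IZR 1 / IZR 2) * /(FF ph) * /(FF ph) * (Fd ph) * (Fd ph)) + ((IZR 1 / IZR 2) * /(FF ph) * (Fdd ph)))
  | 3, 0, 0 => (- ((IZR 1 / IZR 2) * (Fd ph)))
  | 3, 1, 1 => (- ((IZR 1 / IZR 2) * (Fd ph)) - ((IZR 1 / IZR 2) * (x) * (x) * (Fd ph) * (Fd ph)) - ((IZR 1 / IZR 2) * (x) * (x) * (FF ph) * (Fdd ph)))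
  | 3, 1, 2 => (((IZR 1 / IZR 2) * (x) * (Fd ph) * (Fd ph)) + ((IZR 1 / IZR 2) * (x) * (FF ph) * (Fdd ph)))
  | 3, 2, 1 => (((IZR 1 / IZR 2) * (x) * (Fd ph) * (Fd ph)) + ((IZR 1 / IZR 2) * (x) * (FF ph) * (Fdd ph)))
  | 3, 2, 2 => (- ((IZR 1 / IZR 2) * (Fd ph) * (Fd ph)) - ((IZR 1 / IZR 2) * (FF ph) * (Fdd ph)))
  | 3, 3, 3 => (((IZR 1 / IZR 2) * /(FF ph) * /(FF ph) * (Fd ph) * (Fd ph)) - ((IZR 1 / IZR 2) * /(FF ph) * (Fdd ph)))
  | _, _, _ => IZR 0
  end.

Definition dGx (i a b c : nat) (x ph : R) : R :=
  match i with 0 => GxX a b c x ph | 3 => GxP a b c x ph | _ => IZR 0 end.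

Lemma pd_Gamma p i a b c : 0 < p i3 ->
  pd i (Gamma a b c) p = dGx i a b c (p i0) (p i3).
Proof.
  move=> Hp. have Hne : p i3 <> 0 by lra. have HF := FF_pos _ Hp.
  rewrite /pd.
  case: (ord4 i) => [->|[->|[->|->]]].
  - transitivity (Derive (fun t => Gx a b c t (p i3)) (p i0)).
    { apply Derive_ext => t. rewrite GammaE //. }
    simpl.
    case: (ord4 a) => [->|[->|[->|->]]]; case: (ord4 b) => [->|[->|[->|->]]];
    case: (ord4 c) => [->|[->|[->|->]]]; simpl; dsolve Hne HF.
  - transitivity (Derive (fun t => Gx a b c (p i0) (p i3)) (p i1)).
    { apply Derive_ext => t. rewrite GammaE //. }
    by rewrite Derive_const.
  - transitivity (Derive (fun t => Gx a b c (p i0) (p i3)) (p i2)).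
    { apply Derive_ext => t. rewrite GammaE //. }
    by rewrite Derive_const.
  - transitivity (Derive (fun t => Gx a b c (p i0) t) (p i3)).
    { apply Derive_ext_loc. exists (mkposreal _ Hp) => t Ht.
      have Ht' : Rabs (t - p i3) < p i3 := Ht.
      have [Ht2 Ht3] := Rabs_def2 _ _ Ht'.
      rewrite GammaE; [reflexivity | simpl; lra]. }
    simpl.
    case: (ord4 a) => [->|[->|[->|->]]]; case: (ord4 b) => [->|[->|[->|->]]];
    case: (ord4 c) => [->|[->|[->|->]]]; simpl; dsolve Hne HF.
Qed.

Definition RL (b c d e : nat) (x ph : R) : R :=
  match b, c, d, e with
  | 0, 0, 1, 1 => (((IZR 1) * (FF ph)) - ((IZR 1 / IZR 4) * (x) * (x) * /(ph) * (FF ph) * (FF ph)) + ((IZR 1 / IZR 4) * (x) * (x) * (FF ph) * (Fd ph)))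
  | 0, 0, 1, 2 => (((IZR 1 / IZR 4) * (x) * /(ph) * (FF ph) * (FF ph)) - ((IZR 1 / IZR 4) * (x) * (FF ph) * (Fd ph)))
  | 0, 0, 2, 1 => (((IZR 1 / IZR 4) * (x) * /(ph) * (FF ph) * (FF ph)) - ((IZR 1 / IZR 4) * (x) * (FF ph) * (Fd ph)))
  | 0, 0, 2, 2 => (- ((IZR 1 / IZR 4) * /(ph) * (FF ph) * (FF ph)) + ((IZR 1 / IZR 4) * (FF ph) * (Fd ph)))
  | 0, 0, 3, 3 => (- ((IZR 1 / IZR 4) * /(ph)) + ((IZR 1 / IZR 4) * /(FF ph) * (Fd ph)))
  | 0, 1, 0, 1 => (- ((IZR 1) * (FF ph)) + ((IZR 1 / IZR 4) * (x) * (x) * /(ph) * (FF ph) * (FF ph)) - ((IZR 1 / IZR 4) * (x) * (x) * (FF ph) * (Fd ph)))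
  | 0, 1, 0, 2 => (- ((IZR 1 / IZR 4) * (x) * /(ph) * (FF ph) * (FF ph)) + ((IZR 1 / IZR 4) * (x) * (FF ph) * (Fd ph)))
  | 0, 1, 2, 3 => (((IZR 1 / IZR 4) * /(ph) * (FF ph)) - ((IZR 1 / IZR 4) * (Fd ph)))
  | 0, 1, 3, 1 => (((IZR 3 / IZR 4) * (x) * /(ph) * (FF ph)) - ((IZR 3 / IZR 4) * (x) * (Fd ph)))
  | 0, 1, 3, 2 => (- ((IZR 1 / IZR 4) * /(ph) * (FF ph)) + ((IZR 1 / IZR 4) * (Fd ph)))
  | 0, 2, 0, 1 => (- ((IZR 1 / IZR 4) * (x) * /(ph) * (FF ph) * (FF ph)) + ((IZR 1 / IZR 4) * (x) * (FF ph) * (Fd ph)))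
  | 0, 2, 0, 2 => (((IZR 1 / IZR 4) * /(ph) * (FF ph) * (FF ph)) - ((IZR 1 / IZR 4) * (FF ph) * (Fd ph)))
  | 0, 2, 1, 3 => (- ((IZR 1 / IZR 4) * /(ph) * (FF ph)) + ((IZR 1 / IZR 4) * (Fd ph)))
  | 0, 2, 3, 1 => (- ((IZR 1 / IZR 2) * /(ph) * (FF ph)) + ((IZR 1 / IZR 2) * (Fd ph)))
  | 0, 3, 0, 3 => (((IZR 1 / IZR 4) * /(ph)) - ((IZR 1 / IZR 4) * /(FF ph) * (Fd ph)))
  | 0, 3, 1, 1 => (- ((IZR 3 / IZR 4) * (x) * /(ph) * (FF ph)) + ((IZR 3 / IZR 4) * (x) * (Fd ph)))
  | 0, 3, 1, 2 => (((IZR 1 / IZR 4) * /(ph) * (FF ph)) - ((IZR 1 / IZR 4) * (Fd ph)))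
  | 0, 3, 2, 1 => (((IZR 1 / IZR 2) * /(ph) * (FF ph)) - ((IZR 1 / IZR 2) * (Fd ph)))
  | 1, 0, 1, 0 => (- ((IZR 1) * (FF ph)) + ((IZR 1 / IZR 4) * (x) * (x) * /(ph) * (FF ph) * (FF ph)) - ((IZR 1 / IZR 4) * (x) * (x) * (FF ph) * (Fd ph)))
  | 1, 0, 1, 3 => (((IZR 3 / IZR 4) * (x) * /(ph) * (FF ph)) - ((IZR 3 / IZR 4) * (x) * (Fd ph)))
  | 1, 0, 2, 0 => (- ((IZR 1 / IZR 4) * (x) * /(ph) * (FF ph) * (FF ph)) + ((IZR 1 / IZR 4) * (x) * (FF ph) * (Fd ph)))
  | 1, 0, 2, 3 => (- ((IZR 1 / IZR 4) * /(ph) * (FF ph)) + ((IZR 1 / IZR 4) * (Fd ph)))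
  | 1, 0, 3, 2 => (((IZR 1 / IZR 4) * /(ph) * (FF ph)) - ((IZR 1 / IZR 4) * (Fd ph)))
  | 1, 1, 0, 0 => (((IZR 1) * (FF ph)) - ((IZR 1 / IZR 4) * (x) * (x) * /(ph) * (FF ph) * (FF ph)) + ((IZR 1 / IZR 4) * (x) * (x) * (FF ph) * (Fd ph)))
  | 1, 1, 0, 3 => (- ((IZR 3 / IZR 4) * (x) * /(ph) * (FF ph)) + ((IZR 3 / IZR 4) * (x) * (Fd ph)))
  | 1, 1, 2, 2 => (- ((IZR 1 / IZR 4) * /(ph) * (FF ph) * (FF ph)) + ((IZR 1 / IZR 4) * (FF ph) * (Fd ph)))
  | 1, 1, 3, 0 => (- ((IZR 3 / IZR 4) * (x) * /(ph) * (FF ph)) + ((IZR 3 / IZR 4) * (x) * (Fd ph)))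
  | 1, 1, 3, 3 => (- ((IZR 1 / IZR 4) * /(ph)) + ((IZR 1 / IZR 4) * /(FF ph) * (Fd ph)) + ((IZR 1 / IZR 2) * (x) * (x) * (Fdd ph)))
  | 1, 2, 0, 0 => (((IZR 1 / IZR 4) * (x) * /(ph) * (FF ph) * (FF ph)) - ((IZR 1 / IZR 4) * (x) * (FF ph) * (Fd ph)))
  | 1, 2, 0, 3 => (((IZR 1 / IZR 4) * /(ph) * (FF ph)) - ((IZR 1 / IZR 4) * (Fd ph)))
  | 1, 2, 1, 2 => (((IZR 1 / IZR 4) * /(ph) * (FF ph) * (FF ph)) - ((IZR 1 / IZR 4) * (FF ph) * (Fd ph)))
  | 1, 2, 3, 0 => (((IZR 1 / IZR 2) * /(ph) * (FF ph)) - ((IZR 1 / IZR 2) * (Fd ph)))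
  | 1, 2, 3, 3 => (- ((IZR 1 / IZR 2) * (x) * (Fdd ph)))
  | 1, 3, 0, 2 => (- ((IZR 1 / IZR 4) * /(ph) * (FF ph)) + ((IZR 1 / IZR 4) * (Fd ph)))
  | 1, 3, 1, 0 => (((IZR 3 / IZR 4) * (x) * /(ph) * (FF ph)) - ((IZR 3 / IZR 4) * (x) * (Fd ph)))
  | 1, 3, 1, 3 => (((IZR 1 / IZR 4) * /(ph)) - ((IZR 1 / IZR 4) * /(FF ph) * (Fd ph)) - ((IZR 1 / IZR 2) * (x) * (x) * (Fdd ph)))
  | 1, 3, 2, 0 => (- ((IZR 1 / IZR 2) * /(ph) * (FF ph)) + ((IZR 1 / IZR 2) * (Fd ph)))
  | 1, 3, 2, 3 => (((IZR 1 / IZR 2) * (x) * (Fdd ph)))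
  | 2, 0, 1, 0 => (- ((IZR 1 / IZR 4) * (x) * /(ph) * (FF ph) * (FF ph)) + ((IZR 1 / IZR 4) * (x) * (FF ph) * (Fd ph)))
  | 2, 0, 1, 3 => (- ((IZR 1 / IZR 2) * /(ph) * (FF ph)) + ((IZR 1 / IZR 2) * (Fd ph)))
  | 2, 0, 2, 0 => (((IZR 1 / IZR 4) * /(ph) * (FF ph) * (FF ph)) - ((IZR 1 / IZR 4) * (FF ph) * (Fd ph)))
  | 2, 0, 3, 1 => (- ((IZR 1 / IZR 4) * /(ph) * (FF ph)) + ((IZR 1 / IZR 4) * (Fd ph)))
  | 2, 1, 0, 0 => (((IZR 1 / IZR 4) * (x) * /(ph) * (FF ph) * (FF ph)) - ((IZR 1 / IZR 4) * (x) * (FF ph) * (Fd ph)))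
  | 2, 1, 0, 3 => (((IZR 1 / IZR 2) * /(ph) * (FF ph)) - ((IZR 1 / IZR 2) * (Fd ph)))
  | 2, 1, 2, 1 => (((IZR 1 / IZR 4) * /(ph) * (FF ph) * (FF ph)) - ((IZR 1 / IZR 4) * (FF ph) * (Fd ph)))
  | 2, 1, 3, 0 => (((IZR 1 / IZR 4) * /(ph) * (FF ph)) - ((IZR 1 / IZR 4) * (Fd ph)))
  | 2, 1, 3, 3 => (- ((IZR 1 / IZR 2) * (x) * (Fdd ph)))
  | 2, 2, 0, 0 => (- ((IZR 1 / IZR 4) * /(ph) * (FF ph) * (FF ph)) + ((IZR 1 / IZR 4) * (FF ph) * (Fd ph)))
  | 2, 2, 1, 1 => (- ((IZR 1 / IZR 4) * /(ph) * (FF ph) * (FF ph)) + ((IZR 1 / IZR 4) * (FF ph) * (Fd ph)))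
  | 2, 2, 3, 3 => (((IZR 1 / IZR 2) * (Fdd ph)))
  | 2, 3, 0, 1 => (((IZR 1 / IZR 4) * /(ph) * (FF ph)) - ((IZR 1 / IZR 4) * (Fd ph)))
  | 2, 3, 1, 0 => (- ((IZR 1 / IZR 4) * /(ph) * (FF ph)) + ((IZR 1 / IZR 4) * (Fd ph)))
  | 2, 3, 1, 3 => (((IZR 1 / IZR 2) * (x) * (Fdd ph)))
  | 2, 3, 2, 3 => (- ((IZR 1 / IZR 2) * (Fdd ph)))
  | 3, 0, 1, 1 => (- ((IZR 3 / IZR 4) * (x) * /(ph) * (FF ph)) + ((IZR 3 / IZR 4) * (x) * (Fd ph)))
  | 3, 0, 1, 2 => (((IZR 1 / IZR 2) * /(ph) * (FF ph)) - ((IZR 1 / IZR 2) * (Fd ph)))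
  | 3, 0, 2, 1 => (((IZR 1 / IZR 4) * /(ph) * (FF ph)) - ((IZR 1 / IZR 4) * (Fd ph)))
  | 3, 0, 3, 0 => (((IZR 1 / IZR 4) * /(ph)) - ((IZR 1 / IZR 4) * /(FF ph) * (Fd ph)))
  | 3, 1, 0, 1 => (((IZR 3 / IZR 4) * (x) * /(ph) * (FF ph)) - ((IZR 3 / IZR 4) * (x) * (Fd ph)))
  | 3, 1, 0, 2 => (- ((IZR 1 / IZR 2) * /(ph) * (FF ph)) + ((IZR 1 / IZR 2) * (Fd ph)))
  | 3, 1, 2, 0 => (- ((IZR 1 / IZR 4) * /(ph) * (FF ph)) + ((IZR 1 / IZR 4) * (Fd ph)))
  | 3, 1, 3, 1 => (((IZR 1 / IZR 4) * /(ph)) - ((IZR 1 / IZR 4) * /(FF ph) * (Fd ph)) - ((IZR 1 / IZR 2) * (x) * (x) * (Fdd ph)))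
  | 3, 1, 3, 2 => (((IZR 1 / IZR 2) * (x) * (Fdd ph)))
  | 3, 2, 0, 1 => (- ((IZR 1 / IZR 4) * /(ph) * (FF ph)) + ((IZR 1 / IZR 4) * (Fd ph)))
  | 3, 2, 1, 0 => (((IZR 1 / IZR 4) * /(ph) * (FF ph)) - ((IZR 1 / IZR 4) * (Fd ph)))
  | 3, 2, 3, 1 => (((IZR 1 / IZR 2) * (x) * (Fdd ph)))
  | 3, 2, 3, 2 => (- ((IZR 1 / IZR 2) * (Fdd ph)))
  | 3, 3, 0, 0 => (- ((IZR 1 / IZR 4) * /(ph)) + ((IZR 1 / IZR 4) * /(FF ph) * (Fd ph)))
  | 3, 3, 1, 1 => (- ((IZR 1 / IZR 4) * /(ph)) + ((IZR 1 / IZR 4) * /(FF ph) * (Fd ph)) + ((IZR 1 / IZR 2) * (x) * (x) * (Fdd ph)))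
  | 3, 3, 1, 2 => (- ((IZR 1 / IZR 2) * (x) * (Fdd ph)))
  | 3, 3, 2, 1 => (- ((IZR 1 / IZR 2) * (x) * (Fdd ph)))
  | 3, 3, 2, 2 => (((IZR 1 / IZR 2) * (Fdd ph)))
  | _, _, _, _ => IZR 0
  end.


Lemma RLE p b c d e : 0 < p i3 ->
  (\sum_(a < 4) Riem a b c d p * gcoef p a e)%R = RL b c d e (p i0) (p i3).
Proof.
  move=> Hp. have HF := FF_pos _ Hp.
  rewrite sum4 /Riem !sum4 !pd_Gamma // !GammaE // !gcoefE.
  case: (ord4 b) => [->|[->|[->|->]]]; case: (ord4 c) => [->|[->|[->|->]]];
  case: (ord4 d) => [->|[->|[->|->]]]; case: (ord4 e) => [->|[->|[->|->]]];
  simpl; std; simpl; field; lra.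
Qed.

From Stdlib Require Import Reals Lra Psatz.
From Coquelicot Require Import Coquelicot.
From mathcomp Require Import all_boot all_order all_algebra.
From mathcomp Require Import Rstruct.
Local Open Scope R_scope.

Lemma Rm4E p u v : 0 < p i3 ->
  Rm4 p u v = (\sum_(b < 4) \sum_(c < 4) \sum_(d < 4) \sum_(e < 4)
     RL b c d e (p i0) (p i3) * u c * v d * v b * u e)%R.
Proof.
  move=> Hp. rewrite /Rm4.
  rewrite exchange_big /=. apply eq_bigr => b _.
  rewrite exchange_big /=. apply eq_bigr => c _.
  rewrite exchange_big /=. apply eq_bigr => d _.
  rewrite exchange_big /=. apply eq_bigr => e _.
  rewrite -(RLE p b c d e Hp) !big_distrl /=. apply eq_bigr => a _.
  std. ring.
Qed.

Definition Nexpr (p : point) (u v : tvec) : R :=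
  let x := p i0 in let ph := p i3 in
  let F := FF ph in let F1 := Fd ph in let F2 := Fdd ph in
  let K12 := - F / (ph * ph) in let k := (F - ph * F1) / (4 * ph * ph) in
  let K34 := - F2 / 2 in let mu := -2 * k in
  let zu := x * u i1 - u i2 in let zv := x * v i1 - v i2 in
  let X := ph * (u i0 * v i1 - u i1 * v i0) in let Y := zu * v i3 - u i3 * zv in
  let A := u i0 * zv - zu * v i0 in let B := u i1 * zv - zu * v i1 in
  let C := u i0 * v i3 - u i3 * v i0 in let D := u i1 * v i3 - u i3 * v i1 in
  let S := ph * F * (A * A + B * B) + ph / F * (C * C + D * D) in
  K12 * X * X + K34 * Y * Y + 2 * mu * X * Y + k * S + mu * ph * (A * D - C * B).

Lemma Rm4N p u v : 0 < p i3 -> Rm4 p u v = Nexpr p u v.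
Proof.
  move=> Hp. have HF := FF_pos _ Hp.
  rewrite Rm4E // !sum4 /Nexpr /=. std. field. lra.
Qed.

From Stdlib Require Import Reals Lra Psatz.
From Coquelicot Require Import Coquelicot.
From mathcomp Require Import all_boot all_order all_algebra.
From mathcomp Require Import Rstruct.
Local Open Scope R_scope.

Definition Dexpr (p : point) (u v : tvec) : R :=
  let x := p i0 in let ph := p i3 in let F := FF ph in
  let zu := x * u i1 - u i2 in let zv := x * v i1 - v i2 in
  let X := ph * (u i0 * v i1 - u i1 * v i0) in let Y := zu * v i3 - u i3 * zv in
  let A := u i0 * zv - zu * v i0 in let B := u i1 * zv - zu * v i1 in
  let C := u i0 * v i3 - u i3 * v i0 in let D := u i1 * v i3 - u i3 * v i1 in
  let S := ph * F * (A * A + B * B) + ph / F * (C * C + D * D) in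
  X * X + Y * Y + S.

Lemma DeltaE p u v : 0 < p i3 ->
  gdot p u u * gdot p v v - gdot p u v ^ 2 = Dexpr p u v.
Proof.
  move=> Hp. have HF := FF_pos _ Hp.
  rewrite /gdot !sum4 /Dexpr !gcoefE /=. std. simpl. field. lra.
Qed.

Lemma secE p u v : 0 < p i3 -> sec p u v = Nexpr p u v / Dexpr p u v.
Proof.
  move=> Hp. rewrite /sec. std. rewrite -DeltaE // Rm4N //.
Qed.

Lemma div_nonneg a b : 0 <= a -> 0 < b -> 0 <= a / b.
Proof. intros. unfold Rdiv. apply Rmult_le_pos; auto. left; apply Rinv_0_lt_compat; auto. Qed.

Lemma core (ph F K12 K34 k X Y A B C D : R) :
  0 < ph -> 0 < F ->
  - (2/3) < K12 < 0 -> 0 < - k < 1/6 -> - (2/3) < K34 < 0 -> 4 * (- k) * (- k) < K12 * K34 ->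
  ph * (A * D - C * B) = X * Y ->
  0 < X * X + Y * Y + (ph * F * (A * A + B * B) + ph / F * (C * C + D * D)) ->
  - (2/3) < (K12 * X * X + K34 * Y * Y + 2 * (-2 * k) * X * Y
             + k * (ph * F * (A * A + B * B) + ph / F * (C * C + D * D))
             + (-2 * k) * ph * (A * D - C * B)) /
            (X * X + Y * Y + (ph * F * (A * A + B * B) + ph / F * (C * C + D * D))) < 0.
Proof.
  intros Hph HF HK12 Hm HK34 Hprod HXY HD.
  set (S := ph * F * (A * A + B * B) + ph / F * (C * C + D * D)) in *.
  assert (HS1 : S - 2 * (X * Y) = ph * ((F*A - D)*(F*A - D) + (F*B + C)*(F*B + C)) / F).
  { rewrite <- HXY. unfold S. field. lra. }
  assert (HS2 : S + 2 * (X * Y) = ph * ((F*A + D)*(F*A + D) + (F*B - C)*(F*B - C)) / F).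
  { rewrite <- HXY. unfold S. field. lra. }
  assert (P1 : 0 <= ph * ((F*A - D)*(F*A - D) + (F*B + C)*(F*B + C)) / F).
  { apply div_nonneg; [|lra]. apply Rmult_le_pos; [lra|].
    pose proof (Rle_0_sqr (F*A - D)); pose proof (Rle_0_sqr (F*B + C)); unfold Rsqr in *; lra. }
  assert (P2 : 0 <= ph * ((F*A + D)*(F*A + D) + (F*B - C)*(F*B - C)) / F).
  { apply div_nonneg; [|lra]. apply Rmult_le_pos; [lra|].
    pose proof (Rle_0_sqr (F*A + D)); pose proof (Rle_0_sqr (F*B - C)); unfold Rsqr in *; lra. }
  assert (HN : K12 * X * X + K34 * Y * Y + 2 * (-2 * k) * X * Y + k * S + (-2 * k) * ph * (A * D - C * B)
               = K12 * X * X + K34 * Y * Y + 6 * (- k) * X * Y - (- k) * S).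
  { assert (E1 : (-2*k)*ph*(A*D-C*B) = (-2*k)*(X*Y)) by (rewrite <- HXY; ring).
    rewrite E1. ring. }
  rewrite HN.
  assert (Hb := final_ineq K12 K34 (- k) X Y S HK12 HK34 Hm Hprod).
  destruct Hb as [Hb1 Hb2]; [lra|lra|].
  apply div_bounds; lra.
Qed.

Lemma gram_pos (x ph F u0 u1 u2 u3 v0 v1 v2 v3 : R) : 0 < ph -> 0 < F ->
  (forall a b, a * u0 + b * v0 = 0 -> a * u1 + b * v1 = 0 -> a * u2 + b * v2 = 0 ->
     a * u3 + b * v3 = 0 -> a = 0 /\ b = 0) ->
  let zu := x * u1 - u2 in let zv := x * v1 - v2 in
  let X := ph * (u0 * v1 - u1 * v0) in let Y := zu * v3 - u3 * zv in
  let A := u0 * zv - zu * v0 in let B := u1 * zv - zu * v1 in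
  let C := u0 * v3 - u3 * v0 in let D := u1 * v3 - u3 * v1 in
  0 < X * X + Y * Y + (ph * F * (A * A + B * B) + ph / F * (C * C + D * D)).
Proof.
  intros Hph HF Hli zu zv X Y A B C D.
  assert (sq : forall r, 0 <= r * r) by (intro r; pose proof (Rle_0_sqr r); unfold Rsqr in *; lra).
  assert (HpF : 0 < ph * F) by (apply Rmult_lt_0_compat; lra).
  assert (HpF' : 0 < ph / F) by (apply Rdiv_lt_0_compat; lra).
  assert (T1 := sq X). assert (T2 := sq Y).
  assert (T3 : 0 <= ph * F * (A * A + B * B)) by (apply Rmult_le_pos; [lra|]; generalize (sq A) (sq B); lra).
  assert (T4 : 0 <= ph / F * (C * C + D * D)) by (apply Rmult_le_pos; [lra|]; generalize (sq C) (sq D); lra).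
  destruct (Rle_lt_dec (X * X + Y * Y + (ph * F * (A * A + B * B) + ph / F * (C * C + D * D))) 0) as [H|H]; [|exact H].
  exfalso.
  assert (z : forall r, r * r = 0 -> r = 0).
  { intros r Hr. destruct (Rmult_integral _ _ Hr); auto. }
  assert (HX : X = 0) by (apply z; lra). assert (HY : Y = 0) by (apply z; lra).
  assert (HAB : A * A + B * B = 0).
  { assert (ph * F * (A * A + B * B) = 0) by lra.
    destruct (Rmult_integral _ _ H0); [lra|auto]. }
  assert (HCD : C * C + D * D = 0).
  { assert (ph / F * (C * C + D * D) = 0) by lra.
    destruct (Rmult_integral _ _ H0); [lra|auto]. }
  assert (HA : A = 0) by (apply z; generalize (sq A) (sq B); lra).
  assert (HB : B = 0) by (apply z; generalize (sq A) (sq B); lra).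
  assert (HC : C = 0) by (apply z; generalize (sq C) (sq D); lra).
  assert (HD : D = 0) by (apply z; generalize (sq C) (sq D); lra).
  assert (HP : u0 * v1 - u1 * v0 = 0).
  { unfold X in HX. destruct (Rmult_integral _ _ HX); [lra|auto]. }
  assert (HPx : x * (u0 * v1 - u1 * v0) = 0) by (rewrite HP; ring).
  assert (HDx : x * D = 0) by (rewrite HD; ring).
  assert (HBx : x * B = 0) by (rewrite HB; ring).
  unfold Y, A, B, C, D in *. unfold zu, zv in *.
  destruct (Req_dec v0 0) as [h0|h0].
  2: { destruct (Hli v0 (- u0)) as [e _]; lra. }
  destruct (Req_dec v1 0) as [h1|h1].
  2: { destruct (Hli v1 (- u1)) as [e _]; lra. }
  destruct (Req_dec v3 0) as [h3|h3].
  2: { destruct (Hli v3 (- u3)) as [e _]; lra. }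
  destruct (Req_dec (x * v1 - v2) 0) as [h2|h2].
  2: { destruct (Hli (x * v1 - v2) (- (x * u1 - u2))) as [e _]; lra. }
  assert (Hx1 : x * v1 = 0) by (rewrite h1; ring).
  destruct (Hli 0 1) as [_ e]; try lra.
Qed.

Lemma Delta_pos p u v : 0 < p i3 -> lin_indep u v -> 0 < Dexpr p u v.
Proof.
  move=> Hp Hli. have HF := FF_pos _ Hp.
  rewrite /Dexpr.
  apply: (gram_pos (p i0) (p i3) (FF (p i3)) (u i0) (u i1) (u i2) (u i3) (v i0) (v i1) (v i2) (v i3) Hp HF).
  move=> a b e0 e1 e2 e3. apply: Hli => i.
  case: (ord4 i) => [->|[->|[->|->]]]; std; assumption.
Qed.

Lemma sec_bounds p u v : inM p -> lin_indep u v -> - (2/3) < sec p u v < 0.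
Proof.
  move=> Hp Hli. have HF := FF_pos _ Hp.
  have HD := Delta_pos p u v Hp Hli.
  rewrite secE //. move: HD. rewrite /Nexpr /Dexpr => HD.
  apply: core => //.
  - exact: K12_b.
  - exact: m_b.
  - exact: K34_b.
  - exact: prod_b.
  - ring.
Qed.

Lemma K12_lim t : 0 < t -> - FF t / (t * t) < - (2/3) + t / 6.
Proof.
  intros Ht. assert (H : FF t / (t*t) = Gf t / (t*t*t)) by (unfold FF; field; lra).
  assert (H3 : 0 < t*t*t) by (apply Rmult_lt_0_compat; nra).
  assert (2/3 - t/6 < Gf t / (t*t*t)); [|unfold Rdiv in *; rewrite Ropp_mult_distr_l_reverse; lra].
  apply (Rmult_lt_reg_r (t*t*t)); auto.
  have -> : Gf t / (t * t * t) * (t * t * t) = Gf t by field; lra.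
  unfold Gf. generalize (Eviii t Ht). nra.
Qed.

Lemma K34_lim t : 1 <= t -> - Fdd t / 2 > - (4 / t).
Proof.
  intros Ht.
  assert (Ht0 : 0 < t) by lra.
  assert (H3 : t <= t*t*t) by nra.
  assert (Fdd t / 2 < 4 / t); [|unfold Rdiv in *; rewrite Ropp_mult_distr_l_reverse; lra].
  rewrite K34_eq; auto.
  assert (0 < exp (- t) * (t*t + 2*t + 2)) by (apply Rmult_lt_0_compat; [apply exp_pos|nra]).
  apply (Rmult_lt_reg_r (t*t*t)). nra.
  have -> : (4 - 2 * exp (- t) * (t * t + 2 * t + 2)) / (t * t * t) * (t * t * t)
     = 4 - 2 * exp (- t) * (t * t + 2 * t + 2) by field; lra.
  have -> : 4 / t * (t * t * t) = 4 * (t * t) by field; lra.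
  nra.
Qed.

Definition ptt (t : R) : point := fun j => if j == i3 then t else IZR 0.
Definition ev (k : 'I_4) : tvec := fun j => if j == k then IZR 1 else IZR 0.

Lemma li01 : lin_indep (ev i0) (ev i1).
Proof.
  move=> a b H. have h0 := H i0. have h1 := H i1. move: h0 h1. rewrite /ev /=. std. lra.
Qed.
Lemma li23 : lin_indep (ev i2) (ev i3).
Proof.
  move=> a b H. have h0 := H i2. have h1 := H i3. move: h0 h1. rewrite /ev /=. std. lra.
Qed.

Lemma sec01 t : 0 < t -> sec (ptt t) (ev i0) (ev i1) = - FF t / (t * t).
Proof.
  move=> Ht. have HF := FF_pos _ Ht. rewrite secE /=; [|exact Ht].
  rewrite /Nexpr /Dexpr /ptt /ev /=. field. lra.
Qed.
Lemma sec23 t : 0 < t -> sec (ptt t) (ev i2) (ev i3) = - Fdd t / 2.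
Proof.
  move=> Ht. have HF := FF_pos _ Ht. rewrite secE /=; [|exact Ht].
  rewrite /Nexpr /Dexpr /ptt /ev /=. field. lra.
Qed.

Theorem mainTheorem10 :
  (forall (p : point) (u v : tvec), inM p -> lin_indep u v ->
      -(2/3) < sec p u v < 0)
  /\ (forall eps : R, 0 < eps ->
      exists (p : point) (u v : tvec),
        inM p /\ lin_indep u v /\ sec p u v < -(2/3) + eps)
  /\ (forall eps : R, 0 < eps ->
      exists (p : point) (u v : tvec),
        inM p /\ lin_indep u v /\ - eps < sec p u v).
Proof.
  split; [|split].
  - move=> p u v Hp Hli. exact: sec_bounds.
  - move=> eps He. exists (ptt eps), (ev i0), (ev i1).
    split; [rewrite /inM /ptt /=; exact He|]. split; [exact li01|].
    rewrite sec01 //. have := K12_lim eps He. lra.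
  - move=> eps He. have Ht : 1 <= 1 + 4 / eps.
    { have : 0 < 4 / eps by apply: Rdiv_lt_0_compat; lra. lra. }
    exists (ptt (1 + 4 / eps)), (ev i2), (ev i3).
    split; [rewrite /inM /ptt /=; lra|]. split; [exact li23|].
    rewrite sec23; [|lra]. have := K34_lim _ Ht.
    have : 4 / (1 + 4 / eps) < eps.
    { apply (Rmult_lt_reg_r (1 + 4/eps)); [lra|].
      have -> : 4 / (1 + 4 / eps) * (1 + 4 / eps) = 4 by field; split; lra.
      have -> : eps * (1 + 4 / eps) = eps + 4 by field; lra.
      lra. }
    lra.
Qed.
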